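(* Let $n,k,h,d$ be integers with $k\ge1$ and $2\le h\le n-d\le n-k$, set $s=d+1-k$, let $F$ be a finite field with $|F|\ge sn$, let $\{\lambda_{i,j}: i\in[n],\ j\in\{0,\dots,s-1\}\}$ be $sn$ distinct elements of $F$, and let $\mathcal{C}$ be the set of all $C=(C_1,\dots,C_n)$, $C_i=(c_{i,b,a}: b\in\{1,\dots,d+h-k\},\ a\in\{0,\dots,s^n-1\})$, satisfying $\sum_{i=1}^n \lambda_{i,a_i}^t c_{i,b,a}=0$ for all $t\in\{0,\dots,n-k-1\}$, $b\in\{1,\dots,d+h-k\}$, $a\in\{0,\dots,s^n-1\}$. Let $\mathcal{R}\subseteq[n]\setminus[h]$ with $|\mathcal{R}|=d$ and let $u\in[h]$. Then for every $C\in\mathcal{C}$, the values $$\{c_{u,b,a}: a\in\{0,\dots,s^n-1\},\ b\in\{1,\dots,s-1,s+u-1\}\}\ \cup\ \Big\{\sum_{j=0}^{s-2}c_{i,j+1,a(u,a_u\oplus j)}+c_{i,s+u-1,a(u,a_u\oplus(s-1))}: a\in\{0,\dots,s^n-1\},\ i\in[h]\setminus\{u\}\Big\}$$ are uniquely determined by the values $$\Big\{\sum_{j=0}^{s-2}c_{i,j+1,a(u,a_u\oplus j)}+c_{i,s+u-1,a(u,a_u\oplus(s-1))}: a\in\{0,\dots,s^n-1\},\ i\in\mathcal{R}\Big\},$$ i.e. any two codewords of $\mathcal{C}$ agreeing on the latter values agree on the former values.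
   Context: $[n]=\{1,\dots,n\}$. For $a\in\{0,\dots,s^n-1\}$, $(a_1,\dots,a_n)\in\{0,\dots,s-1\}^n$ denotes its $n$-digit $s$-ary expansion, and $a$ is identified with this tuple. For $i\in[n]$, $v\in\{0,\dots,s-1\}$, $a(i,v)$ denotes the element obtained from $a$ by replacing the $i$th digit $a_i$ by $v$; $\oplus$ denotes addition modulo $s$. Empty sums (when $s=1$) are zero. *)

(* Defs.v *)
From HB Require Import structures.
From mathcomp Require Import all_boot all_order all_algebra.
Set Implicit Arguments. Unset Strict Implicit. Unset Printing Implicit Defensive.
Import GRing.Theory.
Local Open Scope ring_scope.

(* s-ary n-digit index a, identified with its digit tuple (a_1,...,a_n);
   index i in [n] is represented by i-1 : 'I_n. *)
Definition digits (n s : nat) := {ffun 'I_n -> 'I_s}.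

Lemma ord_pos (s : nat) (v : 'I_s) : (0 < s)%N.
Proof. by apply: leq_ltn_trans (ltn_ord v). Qed.

Definition addmod (s : nat) (v : 'I_s) (j : nat) : 'I_s :=
  Ordinal (ltn_pmod (v + j) (ord_pos v)).

Definition upd (n s : nat) (a : digits n s) (i : 'I_n) (v : 'I_s) : digits n s :=
  [ffun j => if j == i then v else a j].

(* A codeword: C i b a = c_{i+1, b+1, a}  (b : 'I_B, B = d+h-k). *)
Definition cword (F : Type) (n s B : nat) := 'I_n -> 'I_B -> digits n s -> F.

(* access a coordinate with a nat (0-based) b-index; out-of-range gives 0
   (only ever used with in-range indices). *)
Definition cb (F : nzRingType) (n s B : nat) (C : cword F n s B)
    (i : 'I_n) (m : nat) (a : digits n s) : F :=
  match @insub nat (fun x => (x < B)%N) _ m with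
  | Some b => C i b a
  | None => 0
  end.

Definition in_code (F : nzRingType) (n k s B : nat) (lambda : 'I_n -> 'I_s -> F)
    (C : cword F n s B) : Prop :=
  forall (t : nat) (b : 'I_B) (a : digits n s), (t < n - k)%N ->
    \sum_(i < n) (lambda i (a i)) ^+ t * C i b a = 0.

Definition repsum (F : nzRingType) (n s B : nat) (C : cword F n s B)
    (u : 'I_n) (i : 'I_n) (a : digits n s) : F :=
  \sum_(j < s.-1) cb C i j (upd a u (addmod (a u) j))
  + cb C i (s.-1 + u) (upd a u (addmod (a u) s.-1)).

(* Main.v *)
Require Import Defs.
From HB Require Import structures.
From mathcomp Require Import all_boot all_order all_algebra zify.
Set Implicit Arguments. Unset Strict Implicit. Unset Printing Implicit Defensive.
Import GRing.Theory.
Local Open Scope ring_scope.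

Lemma vander0 (F : fieldType) (I : finType) (S : {set I}) (p x : I -> F) (m : nat) :
  {in S &, injective p} -> (forall i, i \notin S -> x i = 0) -> (#|S| <= m)%N ->
  (forall t, (t < m)%N -> \sum_i p i ^+ t * x i = 0) -> forall j, x j = 0.
Proof.
move=> pinj xS cardS H j.
case: (boolP (j \in S)) => jS; last exact: xS.
pose P := [pred i | (i \in S) && (i != j)].
pose q := \prod_(i | P i) ('X - (p i)%:P).
have szq : (size q <= m)%N.
  rewrite /q size_prod; last by move=> i _; rewrite polyXsubC_eq0.
  under eq_bigr do rewrite size_XsubC.
  rewrite sum_nat_const.
  have : (#|P| < #|S|)%N.
    rewrite [X in (_ < X)%N](cardD1 j) jS /= ltnS; apply: subset_leq_card.
    by apply/subsetP=> i; rewrite !inE andbC.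
  set c := #|P|; move=> hh; change (((c * 2).+1 - c <= m)%N); lia.
have E : \sum_i q.[p i] * x i = 0.
  under eq_bigr do rewrite (horner_coef_wide _ szq) mulr_suml.
  rewrite exchange_big /= big1 // => t _.
  under eq_bigr do rewrite -mulrA.
  by rewrite -mulr_sumr H ?mulr0.
rewrite (bigD1 j) //= big1 ?addr0 in E; last first.
  move=> i ij; case: (boolP (i \in S)) => iS; last by rewrite xS ?mulr0.
  rewrite /q horner_prod (bigD1 i) /=; last by apply/andP.
  by rewrite hornerXsubC subrr mul0r mul0r.
move/eqP: E; rewrite mulf_eq0 => /orP [|/eqP //].
rewrite /q horner_prod => /eqP E; exfalso; move: E; apply/eqP/prodf_neq0.
move=> i /andP [iS ij]; rewrite hornerXsubC subr_eq0; apply/eqP=> pji.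
by move: ij; rewrite (pinj _ _ jS iS pji) eqxx.
Qed.

Section H.
Variables (F : nzRingType) (n s B : nat).
Implicit Types (C : cword F n s B).

Lemma cb_ord C i (b : 'I_B) a : cb C i b a = C i b a.
Proof. by rewrite /cb valK. Qed.

Lemma cb_code k lambda C : in_code k lambda C ->
  forall t m (a : digits n s), (t < n - k)%N -> \sum_(i < n) lambda i (a i) ^+ t * cb C i m a = 0.
Proof.
move=> HC t m a ht; rewrite /cb; case: insubP => [b _ _|_].
  exact: HC.
by rewrite big1 // => i _; rewrite mulr0.
Qed.

Lemma addmod_inj (v : 'I_s) j1 j2 : (j1 < s)%N -> (j2 < s)%N ->
  addmod v j1 = addmod v j2 -> j1 = j2.
Proof.
move=> h1 h2 /(congr1 val) /= /eqP; rewrite eqn_modDl !modn_small //; exact/eqP.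
Qed.

Lemma upd_same (a : digits n s) u v : upd a u v u = v.
Proof. by rewrite /upd ffunE eqxx. Qed.

Lemma upd_other (a : digits n s) u v i : i != u -> upd a u v i = a i.
Proof. by rewrite /upd ffunE => /negbTE ->. Qed.

Definition bj (u : nat) (j : nat) := if (j < s.-1)%N then j else (s.-1 + u)%N.

Lemma sum_split (G : nat -> F) m m' : m.+1 = m' ->
  \sum_(j < m') G j = \sum_(j < m) G j + G m.
Proof. by move=> <-; rewrite big_ord_recr. Qed.

Lemma repsum_sum C (u i : 'I_n) (a : digits n s) : (0 < s)%N ->
  repsum C u i a = \sum_(j < s) cb C i (bj u j) (upd a u (addmod (a u) j)).
Proof.
move=> s0; rewrite (sum_split (fun j => cb C i (bj u j) (upd a u (addmod (a u) j))) (prednK s0)).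
rewrite /repsum /bj ltnn; congr (_ + _).
by apply: eq_big => // j _; rewrite ltn_ord.
Qed.

Lemma key k lambda C (u : 'I_n) (a : digits n s) t : (0 < s)%N -> in_code k lambda C -> (t < n - k)%N ->
  \sum_(i < n | i != u) lambda i (a i) ^+ t * repsum C u i a
  + \sum_(j < s) lambda u (addmod (a u) j) ^+ t * cb C u (bj u j) (upd a u (addmod (a u) j)) = 0.
Proof.
move=> s0 HC ht.
have E : \sum_(j < s) \sum_(i < n) lambda i (upd a u (addmod (a u) j) i) ^+ t
   * cb C i (bj u j) (upd a u (addmod (a u) j)) = 0.
  by rewrite big1 // => j _; apply: (cb_code HC).
apply: (etrans _ E); rewrite [RHS]exchange_big [RHS](bigD1 u) //= [RHS]addrC; congr (_ + _).
  apply: eq_bigr => i iu; rewrite (repsum_sum C u i a s0) mulr_sumr; apply: eq_bigr => j _.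
  by rewrite upd_other.
by apply: eq_bigr => j _; rewrite upd_same.
Qed.
End H.

Unset Implicit Arguments.

Theorem mainTheorem5 (n k h d : nat) (F : finFieldType)
  (lambda : 'I_n -> 'I_(d.+1 - k) -> F)
  (R : {set 'I_n}) (u : 'I_n) :
  (1 <= k)%N -> (2 <= h)%N -> (h <= n - d)%N -> (n - d <= n - k)%N ->
  ((d.+1 - k) * n <= #|{: F}|)%N ->
  injective (fun p : 'I_n * 'I_(d.+1 - k) => lambda p.1 p.2) ->
  (forall i, i \in R -> (h <= i)%N) -> #|R| = d ->
  (u < h)%N ->
  forall C C' : cword F n (d.+1 - k) (d + h - k),
    in_code k lambda C -> in_code k lambda C' ->
    (forall (a : digits n (d.+1 - k)) (i : 'I_n), i \in R ->
        repsum C u i a = repsum C' u i a) ->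
    (forall (a : digits n (d.+1 - k)) (b : 'I_(d + h - k)),
        (b < (d.+1 - k).-1)%N \/ nat_of_ord b = ((d.+1 - k).-1 + u)%N ->
        C u b a = C' u b a)
    /\
    (forall (a : digits n (d.+1 - k)) (i : 'I_n), (i < h)%N -> i != u ->
        repsum C u i a = repsum C' u i a).
Proof.
move=> hk h2 hhn hdk _ linj hR cardR hu C C' HC HC' HRep.
set s := (d.+1 - k)%N in lambda C C' HC HC' HRep linj *.
have dn : (d.+2 <= n)%N by lia.
have kd : (k <= d)%N by lia.
have s0 : (0 < s)%N by rewrite /s; lia.
have uR : u \notin R by apply/negP => /hR; lia.
pose X (a : digits n s) (z : 'I_n + 'I_s) : F :=
  match z with
  | inl i => if i == u then 0 else repsum C u i a - repsum C' u i a
  | inr j => cb C u (bj s u j) (upd a u (addmod (a u) j))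
             - cb C' u (bj s u j) (upd a u (addmod (a u) j))
  end.
pose p (a : digits n s) (z : 'I_n + 'I_s) : F :=
  match z with
  | inl i => lambda i (a i)
  | inr j => lambda u (addmod (a u) j)
  end.
pose S : {set 'I_n + 'I_s} :=
  [set z | match z with inl i => (i \notin R) && (i != u) | inr _ => true end].
have main : forall a z, X a z = 0.
  move=> a; apply: (@vander0 F _ S (p a) (X a) (n - k)).
  - move=> [i|j] [i'|j']; rewrite !inE /=.
    + move=> _ _ /(linj (i, a i) (i', a i')); by case=> ->.
    + move=> /andP [_ iu] _ /(linj (i, a i) (u, addmod (a u) j')) [iu'].
      by rewrite iu' eqxx in iu.
    + move=> _ /andP [_ iu] /(linj (u, addmod (a u) j) (i', a i')) [iu'].
      by rewrite -iu' eqxx in iu.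
    + move=> _ _ /(linj (u, addmod (a u) j) (u, addmod (a u) j')) /(congr1 snd) /=.
      by move/(addmod_inj (ltn_ord j) (ltn_ord j')) => E; congr inr; apply: val_inj.
  - move=> [i|j]; rewrite inE //= negb_and negbK /=.
    case: eqP => [//|_]; rewrite orbF => iR.
    by rewrite HRep // subrr.
  - have sub : S \subset (inl @: ~: (u |: R)) :|: (inr @: [set: 'I_s]).
      apply/subsetP => -[i|j]; rewrite !inE /= => H.
      + apply/orP; left; apply/imsetP; exists i => //.
        by rewrite !inE negb_or andbC.
      + by apply/orP; right; apply/imsetP; exists j; rewrite ?inE.
    apply: leq_trans (subset_leq_card sub) _.
    apply: leq_trans (leq_card_setU _ _) _.
    have c1 := leq_imset_card (@inl 'I_n 'I_s) (~: (u |: R)).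
    have c2 : (#|(@inr 'I_n 'I_s) @: [set: 'I_s]| <= s)%N.
      by apply: leq_trans (leq_imset_card _ _) _; rewrite cardsT card_ord.
    have c3 := cardsC (u |: R); rewrite cardsU1 uR cardR card_ord in c3.
    rewrite (_ : nat_of_bool true = 1%N) // in c3.
    have hs : s = (d.+1 - k)%N by [].
    apply: leq_trans (leq_add c1 c2) _; lia.
  - move=> t ht; rewrite big_sumType /=.
    rewrite (bigD1 u) //= eqxx mulr0 add0r.
    under eq_bigr => i iu do rewrite (negbTE iu) mulrBr.
    under [X in _ + X]eq_bigr => j _ do rewrite mulrBr.
    rewrite !sumrB addrACA -opprD (key u a s0 HC ht) (key u a s0 HC' ht) subrr //.
split.
- move=> a' b hb.
  pose j := if (b < s.-1)%N then nat_of_ord b else s.-1.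
  have js : (j < s)%N by rewrite /j; case: ifP => H; lia.
  pose a := upd a' u (addmod (a' u) (s - j)).
  have ea : upd a u (addmod (a u) j) = a'.
    apply/ffunP => i; rewrite /a /upd !ffunE; case: eqP => [->|//].
    rewrite eqxx; apply: val_inj => /=.
    by rewrite modnDml -addnA subnK ?(ltnW js) // modnDr modn_small.
  have := main a (inr (Ordinal js)); rewrite /= ea.
  have -> : bj s u j = b.
    case: hb => hb; first by rewrite /bj /j hb hb.
    have nb : (b < s.-1)%N = false by apply/negbTE; rewrite -leqNgt hb leq_addr.
    by rewrite /bj /j nb ltnn hb.
  by rewrite !cb_ord => /eqP; rewrite subr_eq0 => /eqP.
- move=> a i ih iu; have := main a (inl i); rewrite /= (negbTE iu).
  by move/eqP; rewrite subr_eq0 => /eqP.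
Qed.
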